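(* Let $\bm X=[\bm x_1,\dots,\bm x_p]\in\mathbb{R}^{n\times p}$ have full column rank and unit-norm columns, let $M\ge1$ be an integer with $n\ge p+M$, and fix $j\in[p]$. Let $\bm X_{\backslash j}$ be $\bm X$ with column $j$ removed, $\bm U_{\backslash j}\in\mathbb{R}^{n\times(p-1)}$ a matrix whose orthonormal columns span the column space of $\bm X_{\backslash j}$, and $\sigma_j^2=\|\bm x_j-\bm U_{\backslash j}\bm U_{\backslash j}^\top\bm x_j\|^2$. Suppose $s_j\in[0,\frac{M+1}{M}\sigma_j^2]$, and let $\bm e_M\in\mathbb{R}^M$ be the all-ones vector. Then the matrix $\bm A_j=s_j\bm I_M+s_j(1-s_j/\sigma_j^2)\bm e_M\bm e_M^\top$ is positive semidefinite. Moreover, let $\bm C\in\mathbb{R}^{M\times M}$ satisfy $\bm C^\top\bm C=\bm A_j$, let $\bm R\in\mathbb{R}^{n\times M}$ have orthonormal columns with $\bm X^\top\bm R=\bm 0$, and define $$\widetilde{\bm X}^{(j)}=[\widetilde{\bm x}_j^{(1)},\dots,\widetilde{\bm x}_j^{(M)}]=\Big[\frac{s_j}{\sigma_j^2}\bm U_{\backslash j}\bm U_{\backslash j}^\top\bm x_j+\Big(1-\frac{s_j}{\sigma_j^2}\Big)\bm x_j\Big]\bm e_M^\top+\bm R\bm C.$$ Then for each $m\in[M]$: (i) $\bm x_i^\top\widetilde{\bm x}_j^{(m)}=\bm x_i^\top\bm x_j$ for all $i\in[p]\setminus\{j\}$; (ii) $\bm x_j^\top\widetilde{\bm x}_j^{(m)}=1-s_j$;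 (iii) $(\widetilde{\bm x}_j^{(m)})^\top\widetilde{\bm x}_j^{(m)}=1$; (iv) $(\widetilde{\bm x}_j^{(m)})^\top\widetilde{\bm x}_j^{(\ell)}=1-s_j$ for all $\ell\in[M]\setminus\{m\}$. *)

(* Defs.v *)
From mathcomp Require Import all_boot all_algebra.
From mathcomp Require Import reals.
Set Implicit Arguments. Unset Strict Implicit. Unset Printing Implicit Defensive.
Import GRing.Theory Num.Theory.
Local Open Scope ring_scope.

Definition psdmx (R : realType) (m : nat) (A : 'M[R]_m) : Prop :=
  A^T = A /\ forall v : 'cV[R]_m, 0 <= (v^T *m A *m v) 0 0.

Definition sigma2 (R : realType) (n p q : nat) (X : 'M[R]_(n, p))
  (U : 'M[R]_(n, q)) (j : 'I_p) : R :=
  let v := col j X - U *m U^T *m col j X in (v^T *m v) 0 0.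

Definition ones (R : realType) (a b : nat) : 'M[R]_(a, b) := const_mx 1.

Definition Amx (R : realType) (M : nat) (s sig2 : R) : 'M[R]_M :=
  s%:M + (s * (1 - s / sig2)) *: ones R M M.

Definition Xtilde (R : realType) (n p q M : nat) (X : 'M[R]_(n, p))
  (U : 'M[R]_(n, q)) (j : 'I_p) (s : R) (Rm : 'M[R]_(n, M)) (C : 'M[R]_M)
  : 'M[R]_(n, M) :=
  let sg := sigma2 X U j in
  ((s / sg) *: (U *m U^T *m col j X) + (1 - s / sg) *: col j X) *m ones R 1 M
  + Rm *m C.

(* Main.v *)
Require Import Defs.
From mathcomp Require Import all_boot all_algebra.
From mathcomp Require Import reals.
From mathcomp Require Import ring lra order.
Import Order.TTheory GRing.Theory Num.Theory.
Local Open Scope ring_scope.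

Lemma cs_sum (R : realType) M (v : 'I_M -> R) :
  (\sum_i v i) ^+ 2 <= M%:R * \sum_i v i ^+ 2.
Proof.
have H : 0 <= \sum_(i : 'I_M) \sum_(k : 'I_M) (v i - v k) ^+ 2 by apply: sumr_ge0 => i _; apply: sumr_ge0 => k _; exact: sqr_ge0.
have E : \sum_(i : 'I_M) \sum_(k : 'I_M) (v i - v k) ^+ 2 =
   \sum_(i : 'I_M) \sum_(k : 'I_M) (v i ^+ 2) - (\sum_(i : 'I_M) \sum_(k : 'I_M) v i * v k) *+ 2 + \sum_(i : 'I_M) \sum_(k : 'I_M) v k ^+ 2.
  rewrite -sumrMnl. rewrite -sumrB -big_split /=; apply: eq_bigr => i _.
  rewrite -sumrMnl -sumrB -big_split /=; apply: eq_bigr => k _.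
  by rewrite sqrrB.
have S1 : \sum_(i : 'I_M) \sum_(k : 'I_M) (v i ^+ 2) = M%:R * \sum_i v i ^+ 2 :> R.
  rewrite mulr_sumr; apply: eq_bigr => i _; rewrite sumr_const card_ord mulr_natl //.
have S2 : \sum_(i : 'I_M) \sum_k (v k ^+ 2) = M%:R * \sum_i v i ^+ 2 :> R.
  by rewrite sumr_const card_ord mulr_natl.
have S3 : \sum_(i : 'I_M) \sum_(k : 'I_M) v i * v k = (\sum_i v i) ^+ 2.
  by rewrite expr2 mulr_suml; apply: eq_bigr => i _; rewrite mulr_sumr.
rewrite E S1 S2 S3 in H; lra.
Qed.
Lemma colM (R : realType) m n k (A : 'M[R]_(m, n)) (B : 'M[R]_(n, k)) i :
  col i (A *m B) = A *m col i B.
Proof. by apply/matrixP=> a b; rewrite !mxE; apply: eq_bigr => l _; rewrite !mxE. Qed.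

Lemma rowcol11 (R : realType) m n k (A : 'M[R]_(m, n)) (B : 'M[R]_(n, k)) i l :
  row i A *m col l B = ((A *m B) i l)%:M.
Proof.
rewrite [LHS]mx11_scalar; congr (_%:M); rewrite !mxE; apply: eq_bigr => a _; rewrite !mxE //.
Qed.

Lemma psd_part (R : realType) M (s sg : R) :
  (1 <= M)%N -> 0 <= s -> s <= (M.+1%:R / M%:R) * sg -> psdmx (Amx M s sg).
Proof.
move=> M1 s0 hs; split.
  by rewrite /Amx linearD /= tr_scalar_mx linearZ /= /ones trmx_const.
move=> v.
have E : (v^T *m Amx M s sg *m v) 0 0 =
   s * \sum_i (v i 0) ^+ 2 + s * (1 - s / sg) * (\sum_i v i 0) ^+ 2.
  rewrite /Amx mulmxDr mulmxDl mul_mx_scalar -scalemxAl -!scalemxAr -scalemxAl !mxE.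
  congr (_ * _ + _ * _).
    by apply: eq_bigr => i _; rewrite !mxE expr2.
  rewrite expr2 mulr_suml; apply: eq_bigr => i _; rewrite !mxE mulr_sumr mulrC mulr_sumr; apply: eq_bigr => k _; by rewrite !mxE mulr1 mulrC.
rewrite E.
have cs := cs_sum _ _ (fun i => v i 0).
set N := \sum_i _ in E cs *; set q := \sum_i _ in E cs *.
have N0 : 0 <= N by apply: sumr_ge0 => i _; exact: sqr_ge0.
have q0 : 0 <= q ^+ 2 by exact: sqr_ge0.
have [ha|ha] := lerP 0 (1 - s / sg).
  by apply: addr_ge0; [exact: mulr_ge0|apply: mulr_ge0 => //; exact: mulr_ge0].
have Mp : 0 < M%:R :> R by rewrite ltr0n.
have c0 : 0 < M.+1%:R / M%:R :> R by apply: divr_gt0; rewrite ltr0n.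
have sg0 : 0 < sg.
  have [//|sgn] := ltrP 0 sg.
  have : s <= 0 by apply: le_trans hs _; apply: mulr_ge0_le0 => //; exact: ltW.
  move=> sn; have s00 : s = 0 by apply/eqP; rewrite eq_le sn s0.
  by move: ha; rewrite s00 mul0r subr0 ltr10.
have hb : s / sg <= M.+1%:R / M%:R by rewrite ler_pdivrMr // mulrC.
have hc : 0 <= 1 + M%:R * (1 - s / sg).
  move: hb; rewrite ler_pdivlMr // -addn1 natrD => hb.
  nra.
set a := s / sg in ha hc *.
have -> : s * N + s * (1 - a) * q ^+ 2 =
  s * (N * (1 + M%:R * (1 - a))) + (s * - (1 - a)) * (M%:R * N - q ^+ 2) by ring.
apply: addr_ge0; apply: mulr_ge0 => //; try exact: mulr_ge0.
  by apply: mulr_ge0 => //; rewrite oppr_ge0 ltW.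
by rewrite subr_ge0.
Qed.
Lemma colDm (R : realType) m n (A B : 'M[R]_(m, n)) i : col i (A + B) = col i A + col i B.
Proof. by apply/matrixP=> a b; rewrite !mxE. Qed.

Theorem lemma2p1 (R : realType) (n p M : nat) (X : 'M[R]_(n, p)) (j : 'I_p)
  (U : 'M[R]_(n, p.-1)) (s : R) :
  \rank X = p ->
  (forall i : 'I_p, (col i X)^T *m col i X = 1%:M) ->
  (1 <= M)%N -> (p + M <= n)%N ->
  U^T *m U = 1%:M ->
  (U^T == (col' j X)^T)%MS ->
  0 <= s -> s <= (M.+1%:R / M%:R) * sigma2 X U j ->
  psdmx (Amx M s (sigma2 X U j)) /\
  (forall (C : 'M[R]_M) (Rm : 'M[R]_(n, M)),
     C^T *m C = Amx M s (sigma2 X U j) ->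
     Rm^T *m Rm = 1%:M ->
     X^T *m Rm = 0 ->
     let Xt := Xtilde X U j s Rm C in
     forall m : 'I_M,
       (forall i : 'I_p, i != j -> (col i X)^T *m col m Xt = (col i X)^T *m col j X) /\
       (col j X)^T *m col m Xt = (1 - s)%:M /\
       (col m Xt)^T *m col m Xt = 1%:M /\
       (forall l : 'I_M, l != m -> (col m Xt)^T *m col l Xt = (1 - s)%:M)).
Proof.
move=> hrank hunit M1 hn hU hMS s0 hs.
split; first exact: psd_part.
move=> C Rm hC hR hXR Xt.
case/andP: hMS => hUX hXU.
set x := col j X.
set sg := sigma2 X U j.
set P := U *m U^T.
have hPP : P *m P = P by rewrite /P mulmxA -(mulmxA U) hU mulmx1.
have hPT : P^T = P by rewrite /P trmx_mul trmxK.
have hxx : x^T *m x = 1%:M by exact: hunit.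
have hcolX : forall k, (col (lift j k) X)^T = row k (col' j X)^T.
  by move=> k; apply/matrixP => a b; rewrite !mxE.
have hsub : forall i, i != j -> (col i X)^T *m P = (col i X)^T.
  move=> i; case: (unliftP j i) => [k ->|->]; last by rewrite eqxx.
  move=> _; have : ((col (lift j k) X)^T <= U^T)%MS.
    by rewrite hcolX; apply: submx_trans (row_sub _ _) hXU.
  by case/submxP => D ->; rewrite /P !mulmxA -(mulmxA D) hU mulmx1.
have hXiR : forall i, (col i X)^T *m Rm = 0.
  by move=> i; rewrite tr_col -row_mul hXR row0.
have hcXR : (col' j X)^T *m Rm = 0.
  apply/row_matrixP => k; rewrite row_mul row0 -hcolX; exact: hXiR.
have hUR : U^T *m Rm = 0.
  by case/submxP: hUX => W ->; rewrite -mulmxA hcXR mulmx0.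
have hxR : x^T *m Rm = 0 by exact: hXiR.
have hPxR : x^T *m P *m Rm = 0 by rewrite /P -!mulmxA hUR !mulmx0.
set t := (x^T *m P *m x) 0 0.
have K1 : x^T *m P *m x = t%:M by exact: mx11_scalar.
have K2 : x^T *m P *m P *m x = t%:M by rewrite -(mulmxA _ P P) hPP.
have hsg : sg = 1 - t.
  rewrite /sg /sigma2 -/x; change (U *m U^T) with P; clearbody P; rewrite [(x - _)^T]linearB /= trmx_mul hPT mulmxBl !mulmxBr !mulmxA.
  rewrite hxx K1 K2 !mxE eqxx /=; ring.
move: hs hC; rewrite -/sg => hs hC.
set a := s / sg.
have has : a * sg = s.
  have [e|sgn0] := eqVneq sg 0; last by rewrite /a divfK.
  rewrite e mulr0; move: hs; rewrite e mulr0 => hs; apply/eqP; by rewrite eq_le hs s0.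
have hA : forall m l, Amx M s sg m l = s *+ (m == l) + s * (1 - a).
  by move=> m l; rewrite /Amx !mxE mulr1.
have h1 : forall m, col m (ones R 1 M) = 1%:M.
  by move=> m; apply/matrixP => i k; rewrite !ord1 !mxE.
have hcol : forall m, col m Xt = a *: (P *m x) + (1 - a) *: x + Rm *m col m C.
  by move=> m; rewrite /Xt /Xtilde -/x -/P -/sg -/a colDm !colM h1 mulmx1.
clearbody a Xt P.
set v := a *: (P *m x) + (1 - a) *: x.
have hvT : v^T = a *: (x^T *m P) + (1 - a) *: x^T.
  by rewrite /v linearD !linearZ /= trmx_mul hPT.
have hvR : v^T *m Rm = 0.
  by rewrite hvT mulmxDl -!scalemxAl hPxR hxR !scaler0 addr0.
have hvw : forall l, v^T *m (Rm *m col l C) = 0.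
  by move=> l; rewrite mulmxA hvR mul0mx.
have hwv : forall l, (Rm *m col l C)^T *m v = 0.
  by move=> l; rewrite -[v]trmxK -trmx_mul hvw trmx0.
have hww : forall m l, (Rm *m col m C)^T *m (Rm *m col l C) = (Amx M s sg m l)%:M.
  move=> m l; rewrite trmx_mul mulmxA -(mulmxA _ Rm^T) hR mulmx1 tr_col.
  by rewrite rowcol11 hC.
have hvv : v^T *m v = (1 - s - s + a * s)%:M.
  rewrite hvT /v mulmxDl !mulmxDr -!scalemxAl -!scalemxAr !mulmxA K1 K2 hxx.
  apply/matrixP => i k; rewrite !ord1 !mxE eqxx /= -has hsg; ring.
move=> m; split; [|split; [|split]].
- move=> i hij; rewrite hcol !mulmxDr -!scalemxAr !mulmxA hsub // hXiR mul0mx addr0.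
  by rewrite -scalerDl addrC subrK scale1r.
- rewrite hcol !mulmxDr -!scalemxAr !mulmxA K1 hxx hxR mul0mx addr0.
  apply/matrixP => i k; rewrite !ord1 !mxE eqxx /= -has hsg; ring.
- rewrite hcol -/v [(v + _)^T]linearD /= mulmxDl ![_ *m (v + _)]mulmxDr hvv hvw hwv hww hA eqxx.
  apply/matrixP => i k; rewrite !ord1 !mxE eqxx /= -has; ring.
- move=> l hlm; rewrite !hcol -/v [(v + _)^T]linearD /= mulmxDl ![_ *m (v + _)]mulmxDr hvv hvw hwv hww hA.
  rewrite eq_sym (negbTE hlm).
  apply/matrixP => i k; rewrite !ord1 !mxE eqxx /= -has; ring.
Qed.
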